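(* Let $d\ge1$, $T>0$, let $A\in\mathbb{R}^{d\times d}$ be symmetric positive semi-definite, let $V:\mathbb{R}^d\to\mathbb{R}$ be twice continuously differentiable, and let $U(y)=\frac12 y^{\intercal}Ay+V(y)$. Let $G:\mathbb{R}^d\to\mathbb{R}^{d\times d}$ be continuous with $G(y)$ symmetric and $v^{\intercal}G(y)v\ge v^{\intercal}\Gamma v>0$ for all $y$ and all $v\neq0$, for a fixed symmetric positive definite matrix $\Gamma$. Consider the gradient system $G(y(t))\dot y(t)=-\nabla U(y(t))$, $y(0)=y_0\in\mathbb{R}^d$. Let $\varphi_0,\ldots,\varphi_{r-1}$ be sufficiently smooth, linearly independent real functions on $[0,T]$, let $0<h\le T$, and let $X_h,Y_h,\mathcal{P}_h$ be as described in the context. Suppose $\tilde u\in X_h$ satisfies $\tilde u(0)=y_0$ and $$G(\tilde u(\tau))\,\tilde u'(\tau)+A\tilde u(\tau)=-\mathcal{P}_h\big(\nabla V(\tilde u(\cdot))\big)(\tau),\qquad\tau\in[0,1],$$ and set $y_1=\tilde u(1)$ (the EFFED method). Then $U(y_1)\le U(y_0)$.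
   Context: Function spaces: $Y_h$ is the set of $\mathbb{R}^d$-valued functions on $[0,1]$ of the form $\sum_{i=0}^{r-1}\tilde\varphi_i(\tau)W_i$ with $W_i\in\mathbb{R}^d$, where $\tilde\varphi_i(\tau)=\varphi_i(\tau h)$; $X_h$ is the set of $\mathbb{R}^d$-valued functions on $[0,1]$ of the form $W+\sum_{i=0}^{r-1}\big(\int_0^{\tau h}\varphi_i(s)\,ds\big)W_i$ with $W,W_i\in\mathbb{R}^d$. Equivalently $\tilde u(\tau)=u(\tau h)$ for $u$ in $X=\mathrm{span}\{1,\int_0^t\varphi_0,\ldots,\int_0^t\varphi_{r-1}\}$, and $\tilde u'(\tau)$ means $u'(\tau h)=\frac1h\frac{d}{d\tau}\tilde u(\tau)$, which lies in $Y_h$. Projection: for continuous $\tilde w:[0,1]\to\mathbb{R}^d$, $\mathcal{P}_h\tilde w$ is the unique element of $Y_h$ with $\int_0^1\tilde v(\tau)\cdot\mathcal{P}_h\tilde w(\tau)\,d\tau=\int_0^1\tilde v(\tau)\cdot\tilde w(\tau)\,d\tau$ for all $\tilde v\in Y_h$, where $\cdot$ denotes entrywise multiplication (so each component of $\mathcal{P}_h\tilde w$ is the $L^2(0,1)$-orthogonal projection of the corresponding component of $\tilde w$ onto $\mathrm{span}\{\tilde\varphi_0,\ldots,\tilde\varphi_{r-1}\}$). *)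

(* Defs.v *)
From HB Require Import structures.
From mathcomp Require Import all_boot all_order all_algebra.
From mathcomp Require Import all_classical all_reals all_analysis.
Set Implicit Arguments. Unset Strict Implicit. Unset Printing Implicit Defensive.
Import Order.TTheory GRing.Theory Num.Theory.
Import numFieldNormedType.Exports.
Local Open Scope classical_set_scope.
Local Open Scope ring_scope.

Section Defs.
Variable R : realType.

Definition oint (a b : R) (f : R -> R) : R :=
  if a <= b then \int[lebesgue_measure]_(x in `[a, b]) f x
  else - \int[lebesgue_measure]_(x in `[b, a]) f x.

Definition evec (d : nat) (i : 'I_d) : 'cV[R]_d := delta_mx i 0.

Definition partial (d : nat) (i : 'I_d) (f : 'cV[R]_d -> R) (y : 'cV[R]_d) : R :=
  'D_(evec i) f y.

Definition grad (d : nat) (f : 'cV[R]_d -> R) (y : 'cV[R]_d) : 'cV[R]_d :=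
  \col_i partial i f y.

Definition C2 (d : nat) (f : 'cV[R]_d -> R) : Prop :=
  continuous f /\
  (forall i y, derivable f y (evec i)) /\
  (forall i, continuous (partial i f)) /\
  (forall i j y, derivable (partial i f) y (evec j)) /\
  (forall i j, continuous (partial j (partial i f))).

Definition qform (d : nat) (M : 'M[R]_d) (v : 'cV[R]_d) : R := (v^T *m M *m v) 0 0.

Definition Uen (d : nat) (A : 'M[R]_d) (V : 'cV[R]_d -> R) (y : 'cV[R]_d) : R :=
  2^-1 * qform A y + V y.

(* generic element  sum_i phi_i(tau h) W_i  of Y_h *)
Definition Yfun (d r : nat) (phi : 'I_r -> R -> R) (h : R)
  (Ws : 'I_r -> 'cV[R]_d) (tau : R) : 'cV[R]_d :=
  \sum_(i < r) phi i (tau * h) *: Ws i.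

(* generic element  W + sum_i (int_0^{tau h} phi_i) W_i  of X_h *)
Definition Xfun (d r : nat) (phi : 'I_r -> R -> R) (h : R)
  (W : 'cV[R]_d) (Ws : 'I_r -> 'cV[R]_d) (tau : R) : 'cV[R]_d :=
  W + \sum_(i < r) oint 0 (tau * h) (phi i) *: Ws i.

(* u~'(tau) := u'(tau h) = (1/h) d/dtau u~(tau) *)
Definition uprime (d : nat) (h : R) (u : R -> 'cV[R]_d) (tau : R) : 'cV[R]_d :=
  h^-1 *: derive1 u tau.

(* p = P_h w : p in Y_h and  int_0^1 v . p = int_0^1 v . w  (entrywise)
   for all v in Y_h *)
Definition is_Ph (d r : nat) (phi : 'I_r -> R -> R) (h : R)
  (w p : R -> 'cV[R]_d) : Prop :=
  (exists Ws, forall tau, p tau = Yfun phi h Ws tau) /\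
  (forall (Vs : 'I_r -> 'cV[R]_d) (k : 'I_d),
     \int[lebesgue_measure]_(tau in `[0, 1]) (Yfun phi h Vs tau k 0 * p tau k 0)
     = \int[lebesgue_measure]_(tau in `[0, 1]) (Yfun phi h Vs tau k 0 * w tau k 0)).

End Defs.

(* Main.v *)
Require Import Defs.
From HB Require Import structures.
From mathcomp Require Import all_boot all_order all_algebra.
From mathcomp Require Import all_classical all_reals all_analysis.
From mathcomp.algebra_tactics Require Import ring.
Import Order.TTheory GRing.Theory Num.Theory.
Import numFieldNormedType.Exports.
Local Open Scope classical_set_scope.
Local Open Scope ring_scope.

Section H1.
Variable R : realType.

Lemma my_mx_entry_le m n (M : 'M[R]_(m, n)) i j : `|M i j| <= `|M|.
Proof.
rewrite [leRHS]/Num.Def.normr/= mx_normrE.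
by apply: le_trans (le_bigmax _ _ (i, j)).
Qed.

Lemma my_mx_norm_le m n (M : 'M[R]_(m, n)) (b : R) : 0 <= b ->
  (forall i j, `|M i j| <= b) -> `|M| <= b.
Proof.
move=> b0 H; rewrite [leLHS]/Num.Def.normr/= mx_normrE.
by apply: bigmax_le => // -[i j] _; exact: H.
Qed.

Lemma my_line_derive d (V : 'cV[R]_d -> R) (a e : 'cV[R]_d) (s : R) :
  derivable V (a + s *: e) e ->
  is_derive s 1 (fun t => V (a + t *: e)) ('D_e V (a + s *: e)).
Proof.
move=> dV.
have E : (fun k : R => k^-1 *: ((fun t => V (a + t *: e)) (k *: 1 + s)
            - (fun t => V (a + t *: e)) s))
  = (fun k => k^-1 *: (V (k *: e + (a + s *: e)) - V (a + s *: e))).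
  apply/funext => k /=.
  by rewrite [k *: 1]mulr1 scalerDl addrCA.
apply: DeriveDef.
  by rewrite /derivable E.
by rewrite /derive /= E.
Qed.


Lemma my_mvt_line d (V : 'cV[R]_d -> R) (a e : 'cV[R]_d) (c : R) :
  (forall t, derivable V (a + t *: e) e) ->
  exists s, `|s| <= `|c| /\ V (a + c *: e) - V a = c * 'D_e V (a + s *: e).
Proof.
move=> H.
pose f := fun t => V (a + t *: e).
have fd (t : R) : is_derive t (1 : R) f ('D_e V (a + t *: e)) := @my_line_derive d V a e t (H t).
have fc : continuous f.
  move=> t; apply: differentiable_continuous; apply/derivable1_diffP.
  exact: (@ex_derive _ _ _ _ _ _ _ (fd t)).
have f0 : f 0 = V a by rewrite /f scale0r addr0.
case: (leP 0 c) => c0.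
  have [s /[!in_itv] /andP[s0 sc] E] :=
    MVT_segment c0 (fun x _ => fd x) (continuous_subspaceT fc).
  exists s; split.
    by rewrite !ger0_norm // (le_trans s0 sc).
  by rewrite -f0 E subr0 mulrC.
have [s /[!in_itv] /andP[cs s0] E] :=
  MVT_segment (ltW c0) (fun x _ => fd x) (continuous_subspaceT fc).
exists s; split.
  by rewrite !ler0_norm ?lerN2 // ltW.
rewrite -f0 -[LHS]opprB E sub0r mulrN opprK mulrC //.
Qed.


Lemma my_decomp d (V : 'cV[R]_d -> R) (z w : 'cV[R]_d) :
  (forall i y, derivable V y (evec R i)) ->
  exists xi : 'I_d -> 'cV[R]_d, (forall j, `|xi j - z| <= `|w - z|) /\
    V w - V z = \sum_(j < d) (w - z) j 0 * partial j V (xi j).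
Proof.
move=> dV.
pose P (n : nat) : 'cV[R]_d := \col_i (if (i < n)%N then w i 0 else z i 0).
have P0 : P 0%N = z by apply/matrixP => i k; rewrite (ord1 k) !mxE.
have Pd : P d = w by apply/matrixP => i k; rewrite (ord1 k) !mxE ltn_ord.
have PS (j : 'I_d) : P j.+1 = P j + (w j 0 - z j 0) *: evec R j.
  apply/matrixP => i k; rewrite (ord1 k) !mxE /=.
  rewrite andbT; case: (ltngtP i j) => [ij|ji|ij].
  - have -> : (i == j) = false by apply/eqP => Eij; rewrite Eij ltnn in ij.
    by rewrite ltnS ltnW // mulr0 addr0.
  - have -> : (i == j) = false by apply/eqP => Eij; rewrite Eij ltnn in ji.
    by rewrite ltnS leqNgt ji /= mulr0 addr0.
  - have ij' : i = j by apply: val_inj.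
    by rewrite ij ltnSn ij' eqxx /= mulr1 addrC subrK.
have step (j : 'I_d) : exists xi, `|xi - z| <= `|w - z| /\
    V (P j.+1) - V (P j) = (w - z) j 0 * partial j V xi.
  have [s [sc E]] := @my_mvt_line d V (P j) (evec R j) (w j 0 - z j 0)
    (fun t => dV j _).
  exists (P j + s *: evec R j); split; last first.
    by rewrite PS E /partial !mxE.
  apply: my_mx_norm_le => // i k; rewrite (ord1 k) !mxE /=.
  rewrite andbT; case: (ltngtP i j) => [ij|ji|ij].
  - have -> : (i == j) = false by apply/eqP => Eij; rewrite Eij ltnn in ij.
    rewrite mulr0 addr0.
    by have := @my_mx_entry_le d 1 (w - z) i 0; rewrite !mxE.
  - have -> : (i == j) = false by apply/eqP => Eij; rewrite Eij ltnn in ji.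
    by rewrite mulr0 addr0 subrr normr0.
  - have ij' : i = j by apply: val_inj.
    rewrite ij' eqxx /= mulr1 addrAC subrr add0r.
    by apply: le_trans sc _; have := @my_mx_entry_le d 1 (w - z) j 0; rewrite !mxE.
have [xi Hxi] := choice step.
exists xi; split; first by move=> j; case: (Hxi j).
have -> : V w - V z = V (P d) - V (P 0%N) by rewrite Pd P0.
rewrite -(telescope_sumr (fun n => V (P n)) (leq0n d)) big_mkord.
by apply: eq_bigr => j _; case: (Hxi j).
Qed.


Lemma my_squeeze_cvg {T : Type} (F : set_system T) {FF : Filter F} d
  (f g : T -> 'cV[R]_d) (a : 'cV[R]_d) :
  (forall t, `|f t - a| <= `|g t - a|) -> g @ F --> a -> f @ F --> a.
Proof.
move=> H /cvgrPdist_le Hg; apply/cvgrPdist_le => e e0.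
move: (Hg e e0); apply: filterS => t Ht.
by rewrite distrC; apply: le_trans (H t) _; rewrite distrC.
Qed.

Lemma my_cvg_sumR {T : Type} (F : set_system T) {FF : Filter F} n
  (f : 'I_n -> T -> R) (a : 'I_n -> R) :
  (forall i, f i @ F --> a i) ->
  (fun t => \sum_(i < n) f i t) @ F --> \sum_(i < n) a i.
Proof.
elim: n f a => [|n IH] f a H.
  under eq_cvg do rewrite big_ord0.
  by rewrite big_ord0; exact: cvg_cst.
under eq_cvg do rewrite big_ord_recr.
rewrite big_ord_recr /=; apply: cvgD; last exact: H.
by apply: (IH (fun i => f (widen_ord (leqnSn n) i))) => i; exact: H.
Qed.

Lemma my_chain d (V : 'cV[R]_d -> R) (z : R -> 'cV[R]_d) (x : R) :
  (forall i y, derivable V y (evec R i)) -> (forall i, continuous (partial i V)) ->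
  derivable z x 1 ->
  is_derive x 1 (V \o z) (\sum_i ('D_1 z x) i 0 * partial i V (z x)).
Proof.
move=> dV cV dz.
have zc : {for x, continuous z}.
  by apply: differentiable_continuous; apply/derivable1_diffP.
have [xi Hxi] := choice (fun k : R => @my_decomp d V (z x) (z (k *: 1 + x)) dV).
have Dq : (fun k : R => k^-1 *: (z (k *: 1 + x) - z x)) @ 0^' --> 'D_1 z x.
  exact: dz.
have inner : (fun k : R => k *: 1 + x) @ 0^' --> x.
  have -> : (fun k : R => k *: (1:R) + x) = (fun k => k + x).
    by apply/funext=> k; rewrite [_ *: _]mulr1.
  apply: cvg_within_filter.
  suff H : (fun k : R => k + x) @ (0:R) --> 0 + x by rewrite add0r in H.
  by apply: cvgD; [exact: cvg_id | exact: cvg_cst].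
have zk : (fun k : R => z (k *: 1 + x)) @ 0^' --> z x.
  exact: (continuous_cvg _ zc inner).
have E : (fun k : R => k^-1 *: ((V \o z) (k *: 1 + x) - (V \o z) x)) =
  (fun k => \sum_i (k^-1 *: (z (k *: 1 + x) - z x)) i 0 * partial i V (xi k i)).
  apply/funext => k /=; case: (Hxi k) => _ ->.
  rewrite [_ *: _]mulr_sumr; apply: eq_bigr => i _.
  by rewrite [in RHS]mxE mulrA.
have L : (fun k : R => k^-1 *: ((V \o z) (k *: 1 + x) - (V \o z) x)) @ 0^' -->
   \sum_i ('D_1 z x) i 0 * partial i V (z x).
  rewrite E; apply: my_cvg_sumR => i; apply: cvgM.
    exact: (continuous_cvg _ (@coord_continuous _ _ _ i 0 _) Dq).
  apply: (continuous_cvg _ (cV i _)).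
  apply: (@my_squeeze_cvg _ _ _ d _ (fun k => z (k *: 1 + x))) => //.
  by move=> k; case: (Hxi k) => + _; apply.
apply: DeriveDef.
  by apply/cvg_ex; eexists; exact: L.
exact: (cvg_lim _ L).
Qed.

End H1.

Section H2.
Variable R : realType.
Notation mu := (@lebesgue_measure R).

Definition my_Iint (f : R -> R) (x : R) : R := \int[mu]_(t in `[0, x]) f t.

Lemma my_cont_int (f : R -> R) (a b : R) : continuous f ->
  mu.-integrable `[a, b] (EFin \o f).
Proof.
move=> cf; apply: continuous_compact_integrable; first exact: segment_compact.
exact: continuous_subspaceT.
Qed.

Lemma my_Iint_deriv (f : R -> R) (x : R) : continuous f -> 0 < x ->
  is_derive x 1 (my_Iint f) (f x).
Proof.
move=> cf x0.
have xx : x < x + 1 by rewrite ltrDl ltr01.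
have [H1 H2] := @continuous_FTC1_closed R f 0 x (x + 1) xx
  (@my_cont_int f 0 (x + 1) cf) x0 (cf x).
by apply: DeriveDef => //; rewrite -derive1E.
Qed.


Lemma my_Iint0 f : my_Iint f 0 = 0.
Proof. by rewrite /my_Iint set_itv1 Rintegral_set1. Qed.

Lemma my_Iint_cont (f : R -> R) : continuous f -> continuous (my_Iint f).
Proof.
move=> cf x; case: (ltgtP x 0) => [x0|x0|->].
- apply: (@near_cst_continuous _ _ 0).
  move: (lt_nbhsl x0); apply: filterS => y y0.
  by rewrite /my_Iint set_itv_ge ?Rintegral_set0 // bnd_simp -ltNge.
- apply: differentiable_continuous; apply/derivable1_diffP.
  by have := @my_Iint_deriv f x cf x0; case.
- rewrite /continuous_at my_Iint0.
  exact: (@parameterized_integral_cvg_left R 0 1 f ltr01 (@my_cont_int f 0 1 cf)).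
Qed.

End H2.

Section H3.
Variable R : realType.
Notation mu := (@lebesgue_measure R).

Lemma my_dD (W : normedModType R) (f g : R -> W) (x : R) a b :
  is_derive x 1 f a -> is_derive x 1 g b ->
  is_derive x 1 (fun t => f t + g t) (a + b).
Proof. by move=> Hf Hg; have := is_deriveD Hf Hg. Qed.

Lemma my_dcst (W : normedModType R) (w : W) (x : R) :
  is_derive x 1 (fun _ : R => w) 0.
Proof. exact: is_derive_cst. Qed.

Lemma my_dM (f g : R -> R) (x : R) a b :
  is_derive x 1 f a -> is_derive x 1 g b ->
  is_derive x 1 (fun t => f t * g t) (f x * b + g x * a).
Proof. by move=> Hf Hg; have := is_deriveM Hf Hg. Qed.

Lemma my_dZl (W : normedModType R) (f : R -> W) (c : R) (x : R) a :
  is_derive x 1 f a -> is_derive x 1 (fun t => c *: f t) (c *: a).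
Proof. by move=> Hf; have := is_deriveZ c Hf. Qed.

Lemma my_dsum (W : normedModType R) n (f : 'I_n -> R -> W) (x : R) a :
  (forall i, is_derive x 1 (f i) (a i)) ->
  is_derive x 1 (fun t => \sum_(i < n) f i t) (\sum_(i < n) a i).
Proof.
elim: n f a => [|n IH] f a H.
  have -> : (fun t => \sum_(i < 0) f i t) = (fun=> 0) by apply/funext => t; rewrite big_ord0.
  by rewrite big_ord0; exact: my_dcst.
have -> : (fun t => \sum_(i < n.+1) f i t) =
  (fun t => \sum_(i < n) f (widen_ord (leqnSn n) i) t + f ord_max t).
  by apply/funext => t; rewrite big_ord_recr.
rewrite big_ord_recr; apply: my_dD.
by apply: (IH (fun i => f (widen_ord (leqnSn n) i))) => i; exact: H.
Qed.

Lemma my_dscal (W : normedModType R) (c : R -> R) (w : W) (x : R) a :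
  is_derive x 1 c a -> is_derive x 1 (fun t => c t *: w) (a *: w).
Proof.
move=> [dc Dc].
have L : (fun k : R => k^-1 *: ((fun t => c t *: w) (k *: 1 + x) - (fun t => c t *: w) x))
   @ 0^' --> a *: w.
  have -> : (fun k : R => k^-1 *: ((fun t => c t *: w) (k *: 1 + x) - (fun t => c t *: w) x))
     = (fun k => (k^-1 *: (c (k *: 1 + x) - c x)) *: w).
    by apply/funext => k /=; rewrite -scalerBl scalerA.
  apply: cvgZr_tmp; rewrite -Dc; exact: dc.
apply: DeriveDef; first by apply/cvg_ex; eexists; exact: L.
exact: (cvg_lim _ L).
Qed.

Lemma my_dlin (x h : R) : is_derive x 1 (fun t : R => t * h) h.
Proof.
have := is_deriveM (is_derive_id x 1) (is_derive_cst h x 1).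
by move/is_derive_eq; apply; rewrite /= scaler0 add0r [_ *: _]mulr1.
Qed.

End H3.

Section H4.
Variable R : realType.
Notation mu := (@lebesgue_measure R).

Lemma my_cont_sum {T : topologicalType} (W : normedModType R) n (f : 'I_n -> T -> W) :
  (forall i, continuous (f i)) -> continuous (fun t => \sum_(i < n) f i t).
Proof.
elim: n f => [|n IH] f H x.
  have -> : (fun t => \sum_(i < 0) f i t) = (fun=> 0) by apply/funext => t; rewrite big_ord0.
  exact: cst_continuous.
have -> : (fun t => \sum_(i < n.+1) f i t) =
  (fun t => \sum_(i < n) f (widen_ord (leqnSn n) i) t + f ord_max t).
  by apply/funext => t; rewrite big_ord_recr.
apply: continuousD; last exact: H.
exact: (IH (fun i => f (widen_ord (leqnSn n) i))).
Qed.

Lemma my_cont_entry {T : topologicalType} m n (M : T -> 'M[R]_(m, n)) i j :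
  continuous M -> continuous (fun t => M t i j).
Proof.
move=> my_cM x; apply: (@continuous_comp _ _ _ M (fun N : 'M[R]_(m, n) => N i j)).
  exact: my_cM.
exact: coord_continuous.
Qed.

Lemma my_int_oc (f : R -> R) : continuous f -> mu.-integrable `]0, 1] (EFin \o f).
Proof.
move=> cf.
apply: (integrableS _ _ _ (@my_cont_int R f 0 1 cf)) => //.
by apply: subset_itvr; rewrite bnd_simp.
Qed.

Lemma my_Rintegral_sum (D : set R) n (f : 'I_n -> R -> R) : measurable D ->
  (forall i, mu.-integrable D (EFin \o f i)) ->
  mu.-integrable D (EFin \o (fun x => \sum_(i < n) f i x)) /\
  \int[mu]_(x in D) (\sum_(i < n) f i x) = \sum_(i < n) \int[mu]_(x in D) f i x.
Proof.
move=> mD; elim: n f => [|n IH] f H.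
  have -> : (fun x => \sum_(i < 0) f i x) = (fun=> 0) by apply/funext => t; rewrite big_ord0.
  rewrite big_ord0; split; first exact: integrable0.
  by rewrite Rintegral_cst // mul0r.
have -> : (fun x => \sum_(i < n.+1) f i x) =
  (fun x => \sum_(i < n) f (widen_ord (leqnSn n) i) x + f ord_max x).
  by apply/funext => t; rewrite big_ord_recr.
have [IH1 IH2] := IH (fun i => f (widen_ord (leqnSn n) i)) (fun i => H _).
split.
  have -> : (EFin \o (fun x => \sum_(i < n) f (widen_ord (leqnSn n) i) x + f ord_max x))
    = ((EFin \o (fun x => (\sum_(i < n) f (widen_ord (leqnSn n) i) x)%R)) \+ (EFin \o f ord_max))%E.
    by apply/funext => t.
  exact: integrableD.
by rewrite RintegralD // IH2 big_ord_recr.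
Qed.


Lemma my_cD {T : topologicalType} (W : normedModType R) (f g : T -> W) :
  continuous f -> continuous g -> continuous (fun t => f t + g t).
Proof. by move=> cf cg x; have := continuousD (cf x) (cg x). Qed.

Lemma my_cM {T : topologicalType} (f g : T -> R) :
  continuous f -> continuous g -> continuous (fun t => f t * g t).
Proof. by move=> cf cg x; have := continuousM (cf x) (cg x). Qed.

Lemma my_cZ {T : topologicalType} (W : normedModType R) (s : T -> R) (f : T -> W) :
  continuous s -> continuous f -> continuous (fun t => s t *: f t).
Proof. by move=> cf cg x; have := continuousZ (cf x) (cg x). Qed.

Lemma my_ccst {T : topologicalType} (W : normedModType R) (w : W) :
  continuous (fun _ : T => w).
Proof. exact: cst_continuous. Qed.

Lemma my_ccomp {S T U : topologicalType} (f : S -> T) (g : T -> U) :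
  continuous f -> continuous g -> continuous (fun t => g (f t)).
Proof. by move=> cf cg x; exact: (@continuous_comp _ _ _ f g x (cf x) (cg (f x))). Qed.

Lemma my_cscale (h : R) : continuous (fun t : R => t * h).
Proof. exact: mulrr_continuous. Qed.

Lemma my_cYfun d r (phi : 'I_r -> R -> R) (h : R) (Ws : 'I_r -> 'cV[R]_d) :
  (forall i, continuous (phi i)) -> continuous (fun t => Yfun phi h Ws t).
Proof.
move=> cphi; rewrite /Yfun; apply: my_cont_sum => l.
apply: my_cZ; last exact: my_ccst.
exact: my_ccomp (my_cscale h) (cphi l).
Qed.

Lemma my_qformE d (M : 'M[R]_d) (y : 'cV[R]_d) :
  qform M y = \sum_j (\sum_i y i 0 * M i j) * y j 0.
Proof.
rewrite /qform !mxE; apply: eq_bigr => j _; rewrite !mxE; congr (_ * _).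
by apply: eq_bigr => i _; rewrite !mxE.
Qed.

End H4.

Arguments my_mx_entry_le {R m n} M i j.
Arguments my_mx_norm_le {R m n} M b _ _.
Arguments my_chain {R d V z x} _ _ _.
Arguments my_Iint {R} f x.
Arguments my_cont_int {R f} a b _.
Arguments my_Iint_deriv {R f x} _ _.
Arguments my_Iint0 {R} f.
Arguments my_Iint_cont {R f} _.
Arguments my_dD {R W f g x a b} _ _.
Arguments my_dcst {R W} w x.
Arguments my_dM {R f g x a b} _ _.
Arguments my_dZl {R W f} c {x a} _.
Arguments my_dsum {R W n f x a} _.
Arguments my_dscal {R W c} w {x a} _.
Arguments my_dlin {R} x h.
Arguments my_cont_sum {R T W n f} _.
Arguments my_cont_entry {R T m n M} i j _.
Arguments my_int_oc {R f} _.
Arguments my_Rintegral_sum {R D n f} _ _.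
Arguments my_cD {R T W f g} _ _.
Arguments my_cM {R T f g} _ _.
Arguments my_cZ {R T W s f} _ _.
Arguments my_ccst {R T W} w.
Arguments my_ccomp {S T U f g} _ _.
Arguments my_cscale {R} h.
Arguments my_cYfun {R d r phi h Ws} _.
Arguments my_qformE {R d} M y.

Theorem theorem3p2 (R : realType) (d : nat) (T : R)
  (A : 'M[R]_d) (V : 'cV[R]_d -> R) (G : 'cV[R]_d -> 'M[R]_d) (Gam : 'M[R]_d)
  (y0 : 'cV[R]_d) (r : nat) (phi : 'I_r -> R -> R) (h : R)
  (u : R -> 'cV[R]_d) :
  (1 <= d)%N -> 0 < T ->
  A^T = A -> (forall v, 0 <= qform A v) ->
  C2 V ->
  continuous G ->
  (forall y, (G y)^T = G y) ->
  Gam^T = Gam ->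
  (forall y v, v != 0 -> qform Gam v <= qform (G y) v /\ 0 < qform Gam v) ->
  (forall i, continuous (phi i)) ->
  (forall c : 'I_r -> R,
     (forall t, 0 <= t <= T -> \sum_(i < r) c i * phi i t = 0) ->
     forall i, c i = 0) ->
  0 < h -> h <= T ->
  (exists W Ws, forall tau, u tau = Xfun phi h W Ws tau) ->
  u 0 = y0 ->
  (exists p, is_Ph phi h (fun tau => grad V (u tau)) p /\
     forall tau, 0 <= tau <= 1 ->
       G (u tau) *m uprime h u tau + A *m u tau = - p tau) ->
  Uen A V (u 1) <= Uen A V y0.
Proof.
move=> d1 T0 AT Apsd C2V cG GT GamT Gpos cphi indep h0 hT [W [Ws uE]] u0
  [p [[[Wp pE] pPh] ode]].
case: C2V => cV [dV [cpV _]].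
pose c (l : 'I_r) (t : R) := my_Iint (phi l) (t * h).
pose v (t : R) : 'cV[R]_d := W + \sum_(l < r) c l t *: Ws l.
pose Y (t : R) : 'cV[R]_d := Yfun phi h Ws t.
have uv (t : R) : 0 <= t -> u t = v t.
  move=> t0; rewrite uE /Xfun /v; congr (_ + _); apply: eq_bigr => l _.
  by rewrite /oint /c /my_Iint ifT // mulr_ge0 // ltW.
have cc l : continuous (c l).
  exact: my_ccomp (my_cscale h) (my_Iint_cont (cphi l)).
have cv : continuous v.
  apply: my_cD; first exact: my_ccst.
  by apply: my_cont_sum => l; apply: my_cZ; [exact: cc | exact: my_ccst].
have cY : continuous Y by exact: my_cYfun.
have dv (t : R) : 0 < t -> is_derive t 1 v (h *: Y t).
  move=> t0.
  have dc l : is_derive t 1 (c l) (phi l (t * h) * h).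
    apply: (@is_derive1_comp _ (my_Iint (phi l)) (fun s => s * h)).
      exact: (my_Iint_deriv (cphi l) (mulr_gt0 t0 h0)).
    exact: my_dlin.
  have := my_dD (my_dcst W t) (my_dsum (fun l => my_dscal (Ws l) (dc l))).
  move/is_derive_eq; apply.
  rewrite add0r /Y /Yfun scaler_sumr; apply: eq_bigr => l _.
  by rewrite scalerA mulrC.
have du (t : R) : 0 < t -> derive1 u t = h *: Y t.
  move=> t0; rewrite derive1E -(@derive_val _ _ _ _ _ _ _ (dv t t0)); apply: near_eq_derive.
  by move: (lt_nbhsr t0); apply: filterS => s s0; rewrite uv // ltW.
have ode' (t : R) : 0 < t <= 1 -> G (v t) *m Y t + A *m v t = - p t.
  move=> /andP[t0 t1]; have := ode t; rewrite ltW //= t1 => /(_ isT).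
  by rewrite /uprime du // scalerA mulVf ?gt_eqF // scale1r uv // ltW.
have Asym (i j : 'I_d) : A i j = A j i by rewrite -[in LHS]AT mxE.
have de (t : R) (i : 'I_d) : 0 < t -> is_derive t 1 (fun s => v s i 0) (h * Y t i 0).
  move=> t0; have dvt := dv t t0.
  have Hd : derivable v t 1 := @ex_derive _ _ _ _ _ _ _ dvt.
  apply: DeriveDef; first by move/derivable_mxP: Hd; apply.
  have := derive_mx Hd; rewrite (@derive_val _ _ _ _ _ _ _ dvt) => /matrixP /(_ i 0).
  by rewrite !mxE => ->.
pose Q (s : R) := \sum_(j < d) (\sum_(i < d) v s i 0 * A i j) * v s j 0.
pose F (s : R) := Uen A V (v s).
have FE : F = (fun s => 2^-1 * Q s + V (v s)).
  by apply/funext => s; rewrite /F /Uen my_qformE.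
pose g (t : R) := h * \sum_(i < d) Y t i 0 * (\sum_(j < d) A i j * v t j 0 + partial i V (v t)).
have dF (t : R) : 0 < t -> is_derive t 1 F (g t).
  move=> t0; rewrite FE.
  have dQ := my_dsum (fun j => my_dM (my_dsum (fun i => my_dM (de t i t0) (my_dcst (A i j) t))) (de t j t0)).
  have dVv := my_chain dV cpV (@ex_derive _ _ _ _ _ _ _ (dv t t0)).
  have := my_dD (my_dZl (2^-1) dQ) dVv.
  move/is_derive_eq; apply.
  rewrite (@derive_val _ _ _ _ _ _ _ (dv t t0)).
  pose K := \sum_(i < d) h * Y t i 0 * \sum_(j < d) A i j * v t j 0.
  have S1 : \sum_(j < d) (\sum_(i < d) v t i 0 * A i j) * (h * Y t j 0) = K.
    apply: eq_bigr => j _; rewrite mulrC; congr (_ * _).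
    by apply: eq_bigr => i _; rewrite Asym mulrC.
  have S2 : \sum_(j < d) v t j 0 * (\sum_(i < d) (v t i 0 * 0 + A i j * (h * Y t i 0))) = K.
    under eq_bigr do rewrite mulr_sumr.
    rewrite exchange_big /K; apply: eq_bigr => i _; rewrite mulr_sumr.
    by apply: eq_bigr => j _; ring.
  rewrite big_split /= S1 S2.
  have h2 : 2^-1 * (K + K) = K.
    by rewrite mulrDr mulrC -splitr.
  rewrite [_ *: _]h2 /g mulr_sumr.
  rewrite /K -big_split; apply: eq_bigr => i _; by rewrite !mxE /= -!mulrA -!mulrDr.
have cQ : continuous Q.
  apply: my_cont_sum => j; apply: my_cM; last exact: (my_cont_entry j 0 cv).
  apply: my_cont_sum => i; apply: my_cM; first exact: (my_cont_entry i 0 cv).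
  exact: my_ccst.
have cF : continuous F.
  rewrite FE; apply: my_cD; first by apply: my_cM; [exact: my_ccst | exact: cQ].
  exact: my_ccomp cv cV.
have cg : continuous g.
  apply: my_cM; first exact: my_ccst.
  apply: my_cont_sum => i; apply: my_cM; first exact: (my_cont_entry i 0 cY).
  apply: my_cD; last exact: (my_ccomp cv (cpV i)).
  apply: my_cont_sum => j; apply: my_cM; first exact: my_ccst.
  exact: (my_cont_entry j 0 cv).
have ftc : \int[lebesgue_measure]_(x in `[0, 1]) g x = F 1 - F 0.
  have HF : derivable_oo_LRcontinuous F 0 1.
    split.
    - move=> x; rewrite in_itv /= => /andP[x0 _].
      exact: (@ex_derive _ _ _ _ _ _ _ (dF x x0)).
    - exact: cvg_at_right_filter (cF 0).
    - exact: cvg_at_left_filter (cF 1).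
  have HF' : {in `]0, 1[, (F^`())%classic =1 g}.
    move=> x; rewrite in_itv /= => /andP[x0 _]; rewrite derive1E.
    exact: (@derive_val _ _ _ _ _ _ _ (dF x x0)).
  have := continuous_FTC2 ltr01 (continuous_subspaceT cg) HF HF'.
  by rewrite /Rintegral => ->; rewrite -EFinB.
pose q (t : R) := qform (G (v t)) (Y t).
pose bb (k : 'I_d) (t : R) := Y t k 0 * partial k V (v t).
pose aa (k : 'I_d) (t : R) := Y t k 0 * p t k 0.
have gE (t : R) : 0 < t <= 1 ->
    g t = - h * q t + h * (\sum_(k < d) bb k t - \sum_(k < d) aa k t).
  move=> tt; have E := ode' t tt.
  pose GY (k : 'I_d) := \sum_(j < d) G (v t) k j * Y t j 0.
  have Ek (k : 'I_d) : \sum_(j < d) A k j * v t j 0 = - p t k 0 - GY k.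
    have := congr1 (fun M : 'cV[R]_d => M k 0) E; rewrite !mxE => <-.
    rewrite /GY; ring.
  have qE : q t = \sum_(k < d) Y t k 0 * GY k.
    rewrite /q my_qformE; under eq_bigr do rewrite mulr_suml.
    rewrite exchange_big; apply: eq_bigr => k _; rewrite /GY mulr_sumr.
    by apply: eq_bigr => j _; ring.
  rewrite /g qE; under eq_bigr => i _ do rewrite Ek.
  rewrite /bb /aa -sumrB mulr_sumr mulr_sumr mulr_sumr -big_split /=.
  by apply: eq_bigr => i _; ring.
have cp : continuous p.
  have -> : p = (fun t => Yfun phi h Wp t) by apply/funext => t; exact: pE.
  exact: my_cYfun cphi.
have cq : continuous q.
  have -> : q = (fun t => \sum_(j < d) (\sum_(i < d) Y t i 0 * G (v t) i j) * Y t j 0).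
    by apply/funext => t; rewrite /q my_qformE.
  apply: my_cont_sum => j; apply: my_cM; last exact: (my_cont_entry j 0 cY).
  apply: my_cont_sum => i; apply: my_cM; first exact: (my_cont_entry i 0 cY).
  exact: (my_cont_entry i j (my_ccomp cv cG)).
have cbb k : continuous (bb k).
  apply: my_cM; first exact: (my_cont_entry k 0 cY).
  exact: (my_ccomp cv (cpV k)).
have caa k : continuous (aa k).
  apply: my_cM; first exact: (my_cont_entry k 0 cY).
  exact: (my_cont_entry k 0 cp).
have qpos (t : R) : 0 <= q t.
  rewrite /q; have [->|Y0] := eqVneq (Y t) 0.
    by rewrite /qform mulmx0 mxE.
  have [H1 H2] := Gpos (v t) (Y t) Y0.
  exact: le_trans (ltW H2) H1.
have I1 : \int[lebesgue_measure]_(x in `[0, 1]) g x =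
          \int[lebesgue_measure]_(x in `]0, 1]) g x.
  by rewrite Rintegral_itv_obnd_cbnd // (my_int_oc cg).
have I2 : \int[lebesgue_measure]_(x in `]0, 1]) g x =
    \int[lebesgue_measure]_(x in `]0, 1])
      (- h * q x + h * (\sum_(k < d) bb k x - \sum_(k < d) aa k x)).
  apply: eq_Rintegral => t; rewrite inE /= in_itv /= => tt; exact: gE.
have cBf (f1 f2 : R -> R) : continuous f1 -> continuous f2 ->
    continuous (fun t => f1 t - f2 t).
  by move=> c1 c2 x; have := continuousB (c1 x) (c2 x).
have csb : continuous (fun x => \sum_(k < d) bb k x) := my_cont_sum cbb.
have csa : continuous (fun x => \sum_(k < d) aa k x) := my_cont_sum caa.
have [_ Sb] := my_Rintegral_sum (D := `]0, 1]) (f := bb) (measurable_itv _)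
  (fun k => my_int_oc (cbb k)).
have [_ Sa] := my_Rintegral_sum (D := `]0, 1]) (f := aa) (measurable_itv _)
  (fun k => my_int_oc (caa k)).
have I3 : \int[lebesgue_measure]_(x in `]0, 1])
      (- h * q x + h * (\sum_(k < d) bb k x - \sum_(k < d) aa k x)) =
    - h * \int[lebesgue_measure]_(x in `]0, 1]) q x +
    h * (\sum_(k < d) \int[lebesgue_measure]_(x in `]0, 1]) bb k x -
         \sum_(k < d) \int[lebesgue_measure]_(x in `]0, 1]) aa k x).
  have iq := my_int_oc cq.
  have iBs := my_int_oc (cBf _ _ csb csa).
  have isb := my_int_oc csb.
  have isa := my_int_oc csa.
  have i1 : lebesgue_measure.-integrable `]0, 1] (EFin \o (fun x => - h * q x)).
    by apply: my_int_oc; apply: my_cM; [exact: my_ccst | exact: cq].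
  have i2 : lebesgue_measure.-integrable `]0, 1]
      (EFin \o (fun x => h * (\sum_(k < d) bb k x - \sum_(k < d) aa k x))).
    apply: my_int_oc; apply: my_cM; first exact: my_ccst.
    exact: cBf csb csa.
  rewrite RintegralD // !RintegralZl // RintegralB //.
  by rewrite Sb Sa.
have I4 : \sum_(k < d) \int[lebesgue_measure]_(x in `]0, 1]) bb k x =
          \sum_(k < d) \int[lebesgue_measure]_(x in `]0, 1]) aa k x.
  apply: eq_bigr => k _.
  have ib := my_int_oc (cbb k).
  have ia := my_int_oc (caa k).
  rewrite !Rintegral_itv_obnd_cbnd //.
  transitivity (\int[lebesgue_measure]_(t in `[0, 1])
                   (Yfun phi h Ws t k 0 * grad V (u t) k 0)).
    apply: eq_Rintegral => t; rewrite inE /= in_itv /= => /andP[t0 _].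
    by rewrite /bb /grad mxE uv.
  by rewrite -pPh; apply: eq_Rintegral => t _.
have key : F 1 - F 0 = - h * \int[lebesgue_measure]_(x in `]0, 1]) q x.
  by rewrite -ftc I1 I2 I3 I4 subrr mulr0 addr0.
have q0 : 0 <= \int[lebesgue_measure]_(x in `]0, 1]) q x.
  by apply: Rintegral_ge0 => t _; exact: qpos.
rewrite -u0 (uv 1) ?ler01 // (uv 0) //.
by rewrite -/(F 1) -/(F 0) -subr_le0 key mulNr oppr_le0 mulr_ge0 // ltW.
Qed.
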